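(* Let $X=\{x_1,\dots,x_n\}$ be a set of Boolean variables and $\mathcal{C}=\{C_1,\dots,C_m\}$ a set of clauses, each consisting of exactly three positive literals (variables from $X$). Let $(G,L)$ be the graph and list assignment constructed from $(\mathcal{C},X)$ as described in the context. Then there is a truth assignment for $X$ such that every clause contains at least one true literal and at least one false literal if and only if $G$ has a colouring that respects $L$.
   Context: Construction of $(G,L)$: for each $x_i\in X$ introduce two adjacent vertices $x_i$ and $\overline{x}_i$ (called $x$-type) with $L(x_i)=L(\overline{x}_i)=\{4,5\}$. For each clause $C_j$ introduce two vertices $C_j$ and $C_j'$ (called $C$-type) with $L(C_j)=L(C_j')=\{1,2,3\}$. Add an edge between every $x$-type vertex and every $C$-type vertex. For each clause $C_j$, fix an order of its literals, say $C_j=\{x_g,x_h,x_i\}$ in that order, and add six new vertices $a_{g,j},a_{h,j},a_{i,j},a'_{g,j},a'_{h,j},a'_{i,j}$ (called $a$-type) with edges $x_ga_{g,j}$, $a_{g,j}C_j$, $x_ha_{h,j}$, $a_{h,j}C_j$, $x_ia_{i,j}$, $a_{i,j}C_j$, $\overline{x}_ga'_{g,j}$, $a'_{g,j}C_j'$, $\overline{x}_ha'_{h,j}$, $a'_{h,j}C_j'$, $\overline{x}_ia'_{i,j}$, $a'_{i,j}C_j'$, and lists $L(a_{g,j})=L(a'_{g,j})=\{1,4\}$, $L(a_{h,j})=L(a'_{h,j})=\{2,4\}$, $L(a_{i,j})=L(a'_{i,j})=\{3,4\}$. A colouring of $G$ is a map $c$ from vertices to positive integers with adjacent vertices receiving distinct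 colours; it respects $L$ if $c(u)\in L(u)$ for every vertex $u$. *)

(* Defs.v *)
From mathcomp Require Import all_boot.
Set Implicit Arguments. Unset Strict Implicit. Unset Printing Implicit Defensive.

(* A 3-SAT instance with positive literals: [cl j k] is the k-th literal
   (k = 0,1,2 in the fixed order g,h,i) of clause C_j, a variable index. *)

(* Vertices of G.
   VX i true  = x_i,   VX i false = \overline{x}_i
   VC j true  = C_j,   VC j false = C_j'
   VA j k true  = a_{cl j k, j},   VA j k false = a'_{cl j k, j} *)
Inductive vertex (n m : nat) : Type :=
| VX : 'I_n -> bool -> vertex n m
| VC : 'I_m -> bool -> vertex n m
| VA : 'I_m -> 'I_3 -> bool -> vertex n m.

Inductive edge (n m : nat) (cl : 'I_m -> 'I_3 -> 'I_n) : vertex n m -> vertex n m -> Prop :=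
| E_xxbar : forall i, edge cl (VX m i true) (VX m i false)
| E_xC : forall i b j b', edge cl (VX m i b) (VC n j b')
| E_ax : forall j k b, edge cl (VX m (cl j k) b) (VA n j k b)
| E_aC : forall j k b, edge cl (VA n j k b) (VC n j b).

Definition adj n m (cl : 'I_m -> 'I_3 -> 'I_n) (u v : vertex n m) : Prop :=
  edge cl u v \/ edge cl v u.

Definition L n m (v : vertex n m) : nat -> Prop :=
  match v with
  | VX _ _ => fun c => c = 4 \/ c = 5
  | VC _ _ => fun c => c = 1 \/ c = 2 \/ c = 3
  | VA _ k _ => fun c => c = (val k).+1 \/ c = 4
  end.

Definition colouring n m (cl : 'I_m -> 'I_3 -> 'I_n) (c : vertex n m -> nat) : Prop :=
  (forall v, 0 < c v) /\ (forall u v, adj cl u v -> c u <> c v).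

Definition respects n m (c : vertex n m -> nat) : Prop :=
  forall v, L v (c v).

Definition nae_sat n m (cl : 'I_m -> 'I_3 -> 'I_n) (t : 'I_n -> bool) : Prop :=
  forall j, (exists k, t (cl j k) = true) /\ (exists k, t (cl j k) = false).

(* Main.v *)
Require Import Defs.
From mathcomp Require Import all_boot.
From mathcomp Require Import zify.

Section Aux.
Variables (n m : nat) (cl : 'I_m -> 'I_3 -> 'I_n).

Lemma back_aux (c : vertex n m -> nat) : colouring cl c -> respects c ->
  forall j b (k : 'I_3), c (VC n j b) = (val k).+1 -> c (VX m (cl j k) b) = 5.
Proof.
move=> [_ Hc] Hr j b k Hk.
have Ha : c (VA n j k b) <> c (VC n j b) by apply: Hc; left; constructor.
have Hx : c (VX m (cl j k) b) <> c (VA n j k b) by apply: Hc; left; constructor.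
have := Hr (VA n j k b); have := Hr (VX m (cl j k) b); rewrite /L /=.
move=> H1 H2; move: Hk; rewrite -[val k]/(nat_of_ord k) => Hk.
lia.
Qed.

Lemma back_ex (c : vertex n m -> nat) : colouring cl c -> respects c ->
  forall j b, exists k : 'I_3, c (VX m (cl j k) b) = 5.
Proof.
move=> Hcol Hr j b.
have := Hr (VC n j b); rewrite /L /= => -[H|[H|H]].
- by exists (@Ordinal 3 0 isT); apply: back_aux.
- by exists (@Ordinal 3 1 isT); apply: back_aux.
- by exists (@Ordinal 3 2 isT); apply: back_aux.
Qed.

Variable t : 'I_n -> bool.
Definition kb (j : 'I_m) (b : bool) : 'I_3 :=
  odflt ord0 [pick k | t (cl j k) == b].

Lemma kbP j b : (exists k, t (cl j k) = b) -> t (cl j (kb j b)) = b.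
Proof.
move=> [k Hk]; rewrite /kb; case: pickP => [x Hx|H].
  by apply/eqP.
by have := H k; rewrite /= Hk eqxx.
Qed.

Definition col (v : vertex n m) : nat :=
  match v with
  | VX i b => if t i == b then 5 else 4
  | VC j b => (val (kb j b)).+1
  | VA j k b => if k == kb j b then 4 else (val k).+1
  end.

Lemma col_edge : nae_sat cl t -> forall u v, edge cl u v -> col u <> col v.
Proof.
move=> Hs u v [] /=.
- by move=> i; case: (t i).
- move=> i b j b'; have := ltn_ord (kb j b'); case: (_ == _); lia.
- move=> j k b; case: (k =P kb j b) => [->|_].
  + have -> : t (cl j (kb j b)) = b by apply: kbP; case: b; case: (Hs j).
    by rewrite eqxx.
  + have := ltn_ord k; case: (_ == _); lia.
- move=> j k b; case: (k =P kb j b) => [_|Hne].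
  + have := ltn_ord (kb j b); lia.
  + by move=> [] /val_inj.
Qed.
End Aux.

Theorem lemma1 (n m : nat) (cl : 'I_m -> 'I_3 -> 'I_n)
  (Hdistinct : forall j, injective (cl j)) :
  (exists t : 'I_n -> bool, nae_sat cl t) <->
  (exists c : vertex n m -> nat, colouring cl c /\ respects c).
Proof.
split.
- move=> [t Hs]; exists (@col _ _ cl t); split; first split.
  + by case=> [i b|j b|j k b] /=; [case: (_ == _)| |case: (_ == _)].
  + move=> u v [H|H]; first exact: (@col_edge _ _ cl t Hs _ _ H).
    by move=> E; apply: (@col_edge _ _ cl t Hs _ _ H).
  + case=> [i b|j b|j k b] /=; rewrite /L.
    * by case: (_ == _); auto.
    * have := ltn_ord (@kb _ _ cl t j b); lia.
    * by case: (_ == _); auto.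
- move=> [c [Hcol Hr]]; exists (fun i => c (VX m i true) == 5) => j; split.
  + have [k Hk] := @back_ex _ _ cl c Hcol Hr j true.
    by exists k; rewrite Hk.
  + have [k Hk] := @back_ex _ _ cl c Hcol Hr j false.
    exists k; apply/eqP; rewrite -Hk.
    by apply: (proj2 Hcol); left; constructor.
Qed.
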